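(* Let $\mathcal A$ be an abelian category and let $0\to F\to M\to C\to 0$ be a fully invariant short exact sequence in $\mathcal A$. (1) $M$ is strongly self-$F$-split if and only if $M$ is self-$F$-split and the ring $\mathrm{End}_{\mathcal A}(C)$ is abelian. (2) $M$ is dual strongly self-$F$-split if and only if $M$ is dual self-$F$-split and the ring $\mathrm{End}_{\mathcal A}(F)$ is abelian.
   Context: A ring is abelian if each of its idempotents is central. Let $\mathcal A$ be an abelian category. A morphism $s:X\to Y$ is a section if $ts=1_X$ for some $t$, and a retraction if $st=1_Y$ for some $t$. A monomorphism $i:K\to M$ is fully invariant if for every morphism $h:M\to M$ there is $\alpha:K\to K$ with $hi=i\alpha$; an epimorphism $d:M\to C$ is fully coinvariant if for every $h:M\to M$ there is $\beta:C\to C$ with $dh=\beta d$. A short exact sequence $0\to F\xrightarrow{i}M\xrightarrow{d}C\to 0$ is fully invariant if $i$ is fully invariant. $M$ is self-$F$-split (resp. strongly self-$F$-split) if for every morphism $g:M\to M$, $\ker(dg)$ is a section (resp. a fully invariant section); $M$ is dual self-$F$-split (resp. dual strongly self-$F$-split) if for every morphism $g:M\to M$, $\mathrm{coker}(gi)$ is a retraction (resp. a fully coinvariant retraction). *)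

(* Defs.v *)
From HB Require Import structures.
From mathcomp Require Import all_boot all_algebra.
Set Implicit Arguments. Unset Strict Implicit. Unset Printing Implicit Defensive.
Import GRing.Theory.
Local Open Scope ring_scope.

Record PreAdd := {
  Obj : Type;
  Mor : Obj -> Obj -> zmodType;
  idm : forall X, Mor X X;
  comp : forall X Y Z, Mor Y Z -> Mor X Y -> Mor X Z;
  compA : forall X Y Z W (h : Mor Z W) (g : Mor Y Z) (f : Mor X Y),
      comp h (comp g f) = comp (comp h g) f;
  comp1m : forall X Y (f : Mor X Y), comp (idm Y) f = f;
  compm1 : forall X Y (f : Mor X Y), comp f (idm X) = f;
  compDl : forall X Y Z (g g' : Mor Y Z) (f : Mor X Y),
      comp (g + g') f = comp g f + comp g' f;
  compDr : forall X Y Z (g : Mor Y Z) (f f' : Mor X Y),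
      comp g (f + f') = comp g f + comp g f'
}.

Arguments idm {_} X.
Arguments comp {_ X Y Z} _ _.
Notation "g \o' f" := (comp g f) (at level 40, left associativity).

Section Notions.
Variable A : PreAdd.
Implicit Types X Y Z K W : Obj A.

Definition mono X Y (f : Mor X Y) : Prop :=
  forall W (g h : Mor W X), f \o' g = f \o' h -> g = h.
Definition epi X Y (f : Mor X Y) : Prop :=
  forall W (g h : Mor Y W), g \o' f = h \o' f -> g = h.

Definition is_kernel X Y K (f : Mor X Y) (k : Mor K X) : Prop :=
  f \o' k = 0 /\
  forall W (g : Mor W X), f \o' g = 0 -> exists! u : Mor W K, k \o' u = g.

Definition is_cokernel X Y C (f : Mor X Y) (c : Mor Y C) : Prop :=
  c \o' f = 0 /\
  forall W (g : Mor Y W), g \o' f = 0 -> exists! u : Mor C W, u \o' c = g.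

Definition is_zero_object Z : Prop :=
  (forall X (f : Mor Z X), f = 0) /\ (forall X (f : Mor X Z), f = 0).

Definition is_biproduct X Y P (i1 : Mor X P) (i2 : Mor Y P)
    (p1 : Mor P X) (p2 : Mor P Y) : Prop :=
  [/\ p1 \o' i1 = idm X, p2 \o' i2 = idm Y, p1 \o' i2 = 0, p2 \o' i1 = 0
    & i1 \o' p1 + i2 \o' p2 = idm P].

Definition section X Y (s : Mor X Y) : Prop := exists t : Mor Y X, t \o' s = idm X.
Definition retraction X Y (s : Mor X Y) : Prop := exists t : Mor Y X, s \o' t = idm Y.

Definition fully_invariant K M (i : Mor K M) : Prop :=
  mono i /\ forall h : Mor M M, exists alpha : Mor K K, h \o' i = i \o' alpha.
Definition fully_coinvariant M C (d : Mor M C) : Prop :=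
  epi d /\ forall h : Mor M M, exists beta : Mor C C, d \o' h = beta \o' d.

(* End(X) is an abelian ring: every idempotent is central
   (multiplication in End(X) is composition). *)
Definition End_abelian X : Prop :=
  forall e : Mor X X, e \o' e = e -> forall a : Mor X X, e \o' a = a \o' e.

Definition short_exact F M C (i : Mor F M) (d : Mor M C) : Prop :=
  [/\ mono i, epi d, is_kernel d i & is_cokernel i d].

(* Kernels/cokernels are determined up to isomorphism; the properties below
   are required of every kernel (resp. cokernel) of the given morphism. *)
Definition self_F_split F M C (i : Mor F M) (d : Mor M C) : Prop :=
  forall g : Mor M M, forall K (k : Mor K M), is_kernel (d \o' g) k -> section k.
Definition strongly_self_F_split F M C (i : Mor F M) (d : Mor M C) : Prop :=
  forall g : Mor M M, forall K (k : Mor K M), is_kernel (d \o' g) k ->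
    section k /\ fully_invariant k.
Definition dual_self_F_split F M C (i : Mor F M) (d : Mor M C) : Prop :=
  forall g : Mor M M, forall K (c : Mor M K), is_cokernel (g \o' i) c -> retraction c.
Definition dual_strongly_self_F_split F M C (i : Mor F M) (d : Mor M C) : Prop :=
  forall g : Mor M M, forall K (c : Mor M K), is_cokernel (g \o' i) c ->
    retraction c /\ fully_coinvariant c.

End Notions.

Record is_abelian (A : PreAdd) : Prop := {
  ab_zero : exists Z : Obj A, is_zero_object Z;
  ab_biprod : forall X Y : Obj A, exists P (i1 : Mor X P) (i2 : Mor Y P)
      (p1 : Mor P X) (p2 : Mor P Y), is_biproduct i1 i2 p1 p2;
  ab_ker : forall (X Y : Obj A) (f : Mor X Y), exists K (k : Mor K X), is_kernel f k;
  ab_coker : forall (X Y : Obj A) (f : Mor X Y), exists C (c : Mor Y C), is_cokernel f c;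
  ab_mono_ker : forall (K X : Obj A) (m : Mor K X), mono m ->
      exists Y (f : Mor X Y), is_kernel f m;
  ab_epi_coker : forall (X C : Obj A) (e : Mor X C), epi e ->
      exists Y (f : Mor Y X), is_cokernel f e
}.

(* Main.v *)
Require Import Defs.
From mathcomp Require Import all_boot all_algebra.
Import GRing.Theory.
Local Open Scope ring_scope.

Lemma subsub (V : zmodType) (x y : V) : x - (x - y) = y.
Proof. by rewrite opprB addrC subrK. Qed.

Section Aux.
Variable A : PreAdd.

Lemma comp0m (X Y Z : Obj A) (f : Mor X Y) : (0 : Mor Y Z) \o' f = 0.
Proof.
have H := compDl (0 : Mor Y Z) 0 f; rewrite addr0 in H.
have: (0 : Mor Y Z) \o' f + 0 \o' f = 0 \o' f + 0 by rewrite addr0 -H.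
by move/addrI.
Qed.

Lemma compm0 (X Y Z : Obj A) (g : Mor Y Z) : g \o' (0 : Mor X Y) = 0.
Proof.
have H := compDr g (0 : Mor X Y) 0; rewrite addr0 in H.
have: g \o' (0 : Mor X Y) + g \o' 0 = g \o' 0 + 0 by rewrite addr0 -H.
by move/addrI.
Qed.

Lemma compNm (X Y Z : Obj A) (g : Mor Y Z) (f : Mor X Y) : (- g) \o' f = - (g \o' f).
Proof. by apply: (addrI (g \o' f)); rewrite -compDl !subrr comp0m. Qed.

Lemma compmN (X Y Z : Obj A) (g : Mor Y Z) (f : Mor X Y) : g \o' (- f) = - (g \o' f).
Proof. by apply: (addrI (g \o' f)); rewrite -compDr !subrr compm0. Qed.

Lemma compBl (X Y Z : Obj A) (g g' : Mor Y Z) (f : Mor X Y) :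
  (g - g') \o' f = g \o' f - g' \o' f.
Proof. by rewrite compDl compNm. Qed.

Lemma compBr (X Y Z : Obj A) (g : Mor Y Z) (f f' : Mor X Y) :
  g \o' (f - f') = g \o' f - g \o' f'.
Proof. by rewrite compDr compmN. Qed.

Lemma kernel_mono (X Y K : Obj A) (f : Mor X Y) (k : Mor K X) :
  is_kernel f k -> mono k.
Proof.
move=> [Hfk Hu] W g h Hgh.
have H0 : f \o' (k \o' g) = 0 by rewrite Defs.compA Hfk comp0m.
have [u [_ Hu']] := Hu W (k \o' g) H0.
rewrite -(Hu' g erefl); apply: Hu'; by rewrite Hgh.
Qed.

Lemma coker_epi (X Y C : Obj A) (f : Mor X Y) (c : Mor Y C) :
  is_cokernel f c -> epi c.
Proof.
move=> [Hfk Hu] W g h Hgh.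
have H0 : (g \o' c) \o' f = 0 by rewrite -Defs.compA Hfk compm0.
have [u [_ Hu']] := Hu W (g \o' c) H0.
rewrite -(Hu' g erefl); apply: Hu'; by rewrite Hgh.
Qed.

Variables (F M C : Obj A) (i : Mor F M) (d : Mor M C).
Hypothesis Hse : short_exact i d.
Hypothesis Hfi : fully_invariant i.

Lemma d_coinv (h : Mor M M) : exists b : Mor C C, d \o' h = b \o' d.
Proof.
case: Hse => _ _ [Hdi _] [_ Hc].
case: Hfi => _ /(_ h) [a Ha].
have H0 : (d \o' h) \o' i = 0 by rewrite -Defs.compA Ha Defs.compA Hdi comp0m.
have [b [Hb _]] := Hc _ _ H0. by exists b.
Qed.

Lemma split_s : self_F_split i d -> exists s : Mor C M, d \o' s = idm C.
Proof.
move=> Hs.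
case: (Hse) => Hmi Hed Hk [Hdi Hc].
have Hk' : is_kernel (d \o' idm M) i by rewrite compm1.
have [t Ht] := Hs (idm M) F i Hk'.
have H0 : (idm M - i \o' t) \o' i = 0.
  by rewrite compBl comp1m -Defs.compA Ht compm1 subrr.
have [s [Hs' _]] := Hc _ _ H0.
exists s; apply: Hed.
rewrite -Defs.compA Hs' compBr Defs.compA Hdi comp0m subr0 comp1m compm1 //.
Qed.

Lemma split_t : dual_self_F_split i d -> exists t : Mor M F, t \o' i = idm F.
Proof.
move=> Hs.
case: (Hse) => Hmi Hed [Hdi Hk] Hc.
have Hc' : is_cokernel (idm M \o' i) d by rewrite comp1m.
have [s Hds] := Hs (idm M) C d Hc'.
have H0 : d \o' (idm M - s \o' d) = 0.
  by rewrite compBr compm1 Defs.compA Hds comp1m subrr.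
have [t [Ht _]] := Hk _ _ H0.
exists t; apply: Hmi.
rewrite Defs.compA Ht compBl compm1 comp1m -Defs.compA Hdi compm0 subr0 //.
Qed.

Lemma idem1 (HA : is_abelian A) :
  (forall g K (k : Mor K M), is_kernel (d \o' g) k -> fully_invariant k) ->
  forall s : Mor C M, d \o' s = idm C ->
  forall e : Mor C C, e \o' e = e -> forall a : Mor C C,
  (idm C - e) \o' a \o' e = 0.
Proof.
move=> Hsfi s Hds e He a.
set g := s \o' ((idm C - e) \o' d).
have Hdg : d \o' g = (idm C - e) \o' d by rewrite /g Defs.compA Hds comp1m.
have [K [k Hk]] := ab_ker HA (d \o' g).
have [_ Hinv] := Hsfi g K k Hk.
rewrite Hdg in Hk.
case: Hk => Hk0 Hku.
have H0 : (idm C - e) \o' d \o' (s \o' e) = 0.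
  by rewrite -Defs.compA (Defs.compA d) Hds comp1m compBl He comp1m subrr.
have [u [Hu _]] := Hku _ _ H0.
have [al Hal] := Hinv (s \o' (a \o' d)).
have -> : (idm C - e) \o' a \o' e = (idm C - e) \o' d \o' (s \o' (a \o' d)) \o' k \o' u.
  by rewrite -!Defs.compA Hu !(Defs.compA d s) Hds !comp1m.
by rewrite -(Defs.compA _ _ k) Hal Defs.compA Hk0 !comp0m.
Qed.

Lemma idem2 (HA : is_abelian A) :
  (forall g K (c : Mor M K), is_cokernel (g \o' i) c -> fully_coinvariant c) ->
  forall t : Mor M F, t \o' i = idm F ->
  forall e : Mor F F, e \o' e = e -> forall a : Mor F F,
  e \o' a \o' (idm F - e) = 0.
Proof.
move=> Hsfi t Hti e He a.
set g := i \o' ((idm F - e) \o' t).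
have Hgi : g \o' i = i \o' (idm F - e) by rewrite /g -!Defs.compA Hti compm1.
have [K [c Hc]] := ab_coker HA (g \o' i).
have [_ Hinv] := Hsfi g K c Hc.
rewrite Hgi in Hc.
case: Hc => Hc0 Hcu.
have H0 : e \o' t \o' (i \o' (idm F - e)) = 0.
  by rewrite Defs.compA -(Defs.compA e t) Hti compm1 compBr compm1 He subrr.
have [u [Hu _]] := Hcu _ _ H0.
have [b Hb] := Hinv (i \o' (a \o' t)).
have -> : e \o' a \o' (idm F - e) = u \o' c \o' (i \o' (a \o' t)) \o' i \o' (idm F - e).
  rewrite Hu !Defs.compA -(Defs.compA e t i) Hti compm1 -(Defs.compA _ t i) Hti compm1 //.
by rewrite -(Defs.compA u c) Hb -!Defs.compA Hc0 !compm0.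
Qed.

Lemma abelian_of (X : Obj A) :
  (forall e : Mor X X, e \o' e = e -> forall a : Mor X X,
     (idm X - e) \o' a \o' e = 0) -> End_abelian X.
Proof.
move=> H e He a.
have He' : (idm X - e) \o' (idm X - e) = idm X - e.
  by rewrite !compBl !compBr !comp1m compm1 He subrr subr0.
have H1 := H e He a.
have H2 := H _ He' a.
move: H1 H2; rewrite !compBl !compBr !comp1m !compm1.
move=> /eqP; rewrite subr_eq0 => /eqP H1.
rewrite opprB addrC subrK.
move=> /eqP; rewrite subr_eq0 => /eqP H2.
by rewrite H2 H1.
Qed.

Lemma abelian_of' (X : Obj A) :
  (forall e : Mor X X, e \o' e = e -> forall a : Mor X X,
     e \o' a \o' (idm X - e) = 0) -> End_abelian X.
Proof.
move=> H; apply: abelian_of => e He a.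
have He' : (idm X - e) \o' (idm X - e) = idm X - e.
  by rewrite !compBl !compBr !comp1m compm1 He subrr subr0.
by have := H _ He' a; rewrite subsub.
Qed.

Lemma part1_bwd : self_F_split i d -> End_abelian C -> strongly_self_F_split i d.
Proof.
move=> Hs Hab g K k Hk.
split; first exact: Hs g K k Hk.
split; first exact: kernel_mono Hk.
move=> h.
have [t Ht] := Hs g K k Hk.
case: (Hse) => _ Hed _ _.
have [bg Hbg] := d_coinv g.
have [bh Hbh] := d_coinv h.
have [ga Hga] := d_coinv (k \o' t).
case: Hk => Hk0 Hku.
have Hgg : ga \o' ga = ga.
  apply: Hed.
  rewrite -Defs.compA -Hga Defs.compA -Hga -!Defs.compA (Defs.compA t k) Ht comp1m //.
have Hbgga : bg \o' ga = 0.
  apply: Hed.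
  by rewrite comp0m -Defs.compA -Hga Defs.compA -Hbg Defs.compA Hk0 comp0m.
have Hdk : d \o' k = ga \o' (d \o' k).
  by rewrite Defs.compA -Hga -!Defs.compA Ht compm1.
have H0 : d \o' g \o' (h \o' k) = 0.
  rewrite Hbg -!Defs.compA (Defs.compA d h) Hbh -Defs.compA Hdk.
  rewrite (Defs.compA bh ga) -(Hab ga Hgg bh) !Defs.compA Hbgga !comp0m //.
have [al [Hal _]] := Hku _ _ H0.
by exists al; rewrite Hal.
Qed.

Lemma part2_bwd : dual_self_F_split i d -> End_abelian F ->
  dual_strongly_self_F_split i d.
Proof.
move=> Hs Hab g K c Hc.
split; first exact: Hs g K c Hc.
split; first exact: coker_epi Hc.
move=> h.
have [s Hcs] := Hs g K c Hc.
case: (Hse) => Hmi _ _ _.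
case: (Hfi) => _ Hal.
have [ag Hag] := Hal g.
have [ah Hah] := Hal h.
have [ga Hga] := Hal (s \o' c).
case: Hc => Hc0 Hcu.
have Hgg : ga \o' ga = ga.
  apply: Hmi.
  rewrite Defs.compA -Hga -Defs.compA -Hga -!Defs.compA (Defs.compA c s) Hcs comp1m //.
have Hgag : ga \o' ag = 0.
  apply: Hmi.
  by rewrite compm0 Defs.compA -Hga -Defs.compA -Hag -Defs.compA Hc0 compm0.
have Hci : c \o' i = c \o' i \o' ga.
  by rewrite -Defs.compA -Hga !Defs.compA Hcs comp1m.
have H0 : c \o' h \o' (g \o' i) = 0.
  rewrite Hag Defs.compA -(Defs.compA c h i) Hah (Defs.compA c i ah) Hci.
  rewrite -(Defs.compA _ ga ah) (Hab ga Hgg ah) -!Defs.compA Hgag !compm0 //.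
have [b [Hb _]] := Hcu _ _ H0.
by exists b; rewrite Hb.
Qed.

Lemma part1_fwd (HA : is_abelian A) :
  strongly_self_F_split i d -> self_F_split i d /\ End_abelian C.
Proof.
move=> Hs.
have Hs1 : self_F_split i d by move=> g K k Hk; case: (Hs g K k Hk).
split=> //.
have [s Hds] := split_s Hs1.
apply: abelian_of.
exact: (idem1 HA (fun g K k Hk => (Hs g K k Hk).2) s Hds).
Qed.

Lemma part2_fwd (HA : is_abelian A) :
  dual_strongly_self_F_split i d -> dual_self_F_split i d /\ End_abelian F.
Proof.
move=> Hs.
have Hs1 : dual_self_F_split i d by move=> g K k Hk; case: (Hs g K k Hk).
split=> //.
have [t Ht] := split_t Hs1.
apply: abelian_of'.
exact: (idem2 HA (fun g K k Hk => (Hs g K k Hk).2) t Ht).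
Qed.

End Aux.

Theorem theorem4p10 (A : PreAdd) (HA : is_abelian A) (F M C : Obj A)
    (i : Mor F M) (d : Mor M C) :
  short_exact i d -> fully_invariant i ->
  (strongly_self_F_split i d <-> self_F_split i d /\ End_abelian C) /\
  (dual_strongly_self_F_split i d <-> dual_self_F_split i d /\ End_abelian F).
Proof.
move=> Hse Hfi; split; split.
- exact: part1_fwd.
- by case=> ? ?; apply: part1_bwd.
- exact: part2_fwd.
- by case=> ? ?; apply: part2_bwd.
Qed.
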